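(* Let $\beta\in[0,1]$ and let $f\in C^{3+\beta}$ with $f'>0$ on $[A,B]$. Then there is a constant $C$ depending only on $f$ (and $[A,B]$) such that for all $\theta,x_1,x_2,x_3\in[A,B]$, $$ \left|\frac{f''(\theta)}{2f'(\theta)}+\frac{f'''(\theta)}{6f'(\theta)}(x_1+x_2+x_3-3\theta)-\left(\frac{f''(\theta)}{2f'(\theta)}\right)^2(x_2+x_3-2\theta)-\frac{f''(x_1)}{2f'(x_1)}-\frac{1}{6}Sf(x_1)(x_2+x_3-2x_1)\right|\le C\Delta_\theta^{1+\beta}, $$ where $\Delta_\theta=\max\{x_1,x_2,x_3,\theta\}-\min\{x_1,x_2,x_3,\theta\}$.
   Context: The Schwarzian derivative is $Sf=\frac{f'''}{f'}-\frac{3}{2}\left(\frac{f''}{f'}\right)^2$. $C^{3+\beta}$ means three times differentiable with $\beta$-Hölder third derivative. *)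

(* Defs.v *)
From Stdlib Require Import Reals.
From Coquelicot Require Import Coquelicot.
Open Scope R_scope.

(* x^a for x >= 0 with the usual convention 0^a = 0 for a > 0, 0^0 = 1
   (Stdlib's Rpower gives Rpower 0 a = 1, which is wrong at 0). *)
Definition rpow (x a : R) : R :=
  if Req_EM_T x 0 then (if Req_EM_T a 0 then 1 else 0) else Rpower x a.

Definition C3beta (f : R -> R) (A B beta : R) : Prop :=
  (forall x, A <= x <= B ->
     ex_derive_n f 1 x /\ ex_derive_n f 2 x /\ ex_derive_n f 3 x) /\
  exists K : R, forall x y, A <= x <= B -> A <= y <= B ->
     Rabs (Derive_n f 3 x - Derive_n f 3 y) <= K * rpow (Rabs (x - y)) beta.

Definition Schwarzian (f : R -> R) (x : R) : R :=
  Derive_n f 3 x / Derive_n f 1 x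
  - 3 / 2 * (Derive_n f 2 x / Derive_n f 1 x) ^ 2.

Definition Delta4 (th x1 x2 x3 : R) : R :=
  Rmax (Rmax x1 x2) (Rmax x3 th) - Rmin (Rmin x1 x2) (Rmin x3 th).

(* Main.v *)
Require Import Defs.
From Stdlib Require Import Reals Lra.
From Coquelicot Require Import Coquelicot.
Open Scope R_scope.

Lemma rpow_ge0 x a : 0 <= rpow x a.
Proof.
  unfold rpow. destruct (Req_EM_T x 0); [destruct (Req_EM_T a 0); lra|].
  unfold Rpower. left. apply exp_pos.
Qed.

Lemma Rpower_1_base a : Rpower 1 a = 1.
Proof. unfold Rpower. rewrite ln_1, Rmult_0_r. apply exp_0. Qed.

Lemma rpow_pos x a : 0 < x -> rpow x a = Rpower x a.
Proof. intros. unfold rpow. destruct (Req_EM_T x 0); [lra|reflexivity]. Qed.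

Lemma rpow_mono x y a : 0 <= a -> 0 <= x <= y -> rpow x a <= rpow y a.
Proof.
  intros Ha Hxy.
  destruct (Req_dec x 0) as [->|Hx].
  - destruct (Req_dec y 0) as [->|Hy]; [lra|].
    rewrite (rpow_pos y) by lra. unfold rpow.
    destruct (Req_EM_T 0 0); [|lra]. destruct (Req_EM_T a 0) as [->|].
    + rewrite Rpower_O by lra. lra.
    + unfold Rpower. left; apply exp_pos.
  - rewrite !rpow_pos by lra. apply Rle_Rpower_l; lra.
Qed.

Lemma rpow_le1t t a : 0 <= a <= 1 -> 0 <= t -> rpow t a <= 1 + t.
Proof.
  intros Ha Ht. destruct (Req_dec t 0) as [->|Hx].
  - unfold rpow. destruct (Req_EM_T 0 0); [|lra]. destruct (Req_EM_T a 0); lra.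
  - rewrite rpow_pos by lra. destruct (Rle_dec t 1).
    + assert (Rpower t a <= Rpower 1 a) by (apply Rle_Rpower_l; lra).
      rewrite Rpower_1_base in H. lra.
    + assert (Rpower t a <= Rpower t 1) by (apply Rle_Rpower; lra).
      rewrite Rpower_1 in H by lra. lra.
Qed.

Lemma rpow_lin t a D : 0 <= a <= 1 -> 0 <= t <= D -> 0 < D ->
  t <= Rpower D (1 - a) * rpow t a.
Proof.
  intros Ha Ht HD. destruct (Req_dec t 0) as [->|Hx].
  - assert (0 <= Rpower D (1-a)) by (unfold Rpower; left; apply exp_pos).
    pose proof (rpow_ge0 0 a). nra.
  - rewrite rpow_pos by lra.
    assert (Rpower t (1-a) <= Rpower D (1-a)) by (apply Rle_Rpower_l; lra).
    assert (E : t = Rpower t a * Rpower t (1-a)).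
    { rewrite <- Rpower_plus. replace (a + (1-a)) with 1 by ring.
      rewrite Rpower_1; lra. }
    assert (0 < Rpower t a) by (unfold Rpower; apply exp_pos).
    nra.
Qed.

Lemma rpow_mul t a : 0 <= a -> 0 <= t -> t * rpow t a = rpow t (1 + a).
Proof.
  intros Ha Ht. destruct (Req_dec t 0) as [->|Hx].
  - unfold rpow at 2. destruct (Req_EM_T 0 0); [|lra]. destruct (Req_EM_T (1+a) 0); [lra|]. ring.
  - rewrite !rpow_pos by lra. rewrite Rpower_plus, Rpower_1 by lra. ring.
Qed.

Definition Bnd (A B : R) (F : R -> R) := exists M, forall x, A <= x <= B -> Rabs (F x) <= M.
Definition Hol (A B be : R) (F : R -> R) := exists c, forall x y, A <= x <= B -> A <= y <= B ->
  Rabs (F x - F y) <= c * rpow (Rabs (x - y)) be.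

Section S.
Variables A B be : R.
Hypothesis Hbe : 0 <= be <= 1.
Hypothesis HAB : A <= B.

Lemma hol_nonneg c F : (forall x y, A <= x <= B -> A <= y <= B ->
  Rabs (F x - F y) <= c * rpow (Rabs (x - y)) be) ->
  forall x y, A <= x <= B -> A <= y <= B ->
  Rabs (F x - F y) <= Rabs c * rpow (Rabs (x - y)) be.
Proof.
  intros H x y Hx Hy. eapply Rle_trans; [apply H; auto|].
  apply Rmult_le_compat_r; [apply rpow_ge0|apply Rle_abs].
Qed.

Lemma hol_bnd F : Hol A B be F -> Bnd A B F.
Proof.
  intros [c Hc]. exists (Rabs (F A) + Rabs c * (1 + (B - A))).
  intros x Hx. assert (HA : A <= A <= B) by lra.
  pose proof (hol_nonneg c F Hc x A Hx HA).
  pose proof (rpow_le1t (Rabs (x - A)) be Hbe (Rabs_pos _)).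
  assert (EA : Rabs (x - A) = x - A) by (apply Rabs_right; lra).
  rewrite EA in H, H0.
  assert (Rabs (F x) <= Rabs (F A) + Rabs (F x - F A)).
  { replace (F x) with (F A + (F x - F A)) at 1 by ring. apply Rabs_triang. }
  pose proof (Rabs_pos c). pose proof (rpow_ge0 (Rabs (x - A)) be).
  rewrite EA in H3.
  assert (Rabs c * rpow (x - A) be <= Rabs c * (1 + (B - A))) by
    (apply Rmult_le_compat_l; lra).
  lra.
Qed.

Lemma bnd_nonneg F : Bnd A B F -> exists M, 0 <= M /\ forall x, A <= x <= B -> Rabs (F x) <= M.
Proof.
  intros [M HM]. exists (Rabs M). split; [apply Rabs_pos|].
  intros x Hx. eapply Rle_trans; [apply HM; auto|apply Rle_abs].
Qed.

Lemma hol_ext F G : (forall x, A <= x <= B -> F x = G x) -> Hol A B be F -> Hol A B be G.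
Proof.
  intros E [c Hc]. exists c. intros x y Hx Hy. rewrite <- !E by auto. auto.
Qed.

Lemma hol_const k : Hol A B be (fun _ => k).
Proof.
  exists 0. intros. replace (k - k) with 0 by ring. rewrite Rabs_R0. lra.
Qed.

Lemma hol_plus F G : Hol A B be F -> Hol A B be G -> Hol A B be (fun x => F x + G x).
Proof.
  intros [c Hc] [d Hd]. exists (c + d). intros x y Hx Hy.
  replace (F x + G x - (F y + G y)) with ((F x - F y) + (G x - G y)) by ring.
  eapply Rle_trans; [apply Rabs_triang|].
  specialize (Hc x y Hx Hy). specialize (Hd x y Hx Hy). lra.
Qed.

Lemma hol_opp F : Hol A B be F -> Hol A B be (fun x => - F x).
Proof.
  intros [c Hc]. exists c. intros x y Hx Hy.
  replace (- F x - - F y) with (- (F x - F y)) by ring. rewrite Rabs_Ropp. auto.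
Qed.

Lemma hol_minus F G : Hol A B be F -> Hol A B be G -> Hol A B be (fun x => F x - G x).
Proof. intros. apply hol_plus; [auto|apply hol_opp; auto]. Qed.

Lemma hol_mult F G : Hol A B be F -> Hol A B be G -> Hol A B be (fun x => F x * G x).
Proof.
  intros HF HG.
  destruct (bnd_nonneg F (hol_bnd F HF)) as [MF [MF0 HMF]].
  destruct (bnd_nonneg G (hol_bnd G HG)) as [MG [MG0 HMG]].
  destruct HF as [c Hc]. destruct HG as [d Hd].
  exists (Rabs c * MG + MF * Rabs d). intros x y Hx Hy.
  replace (F x * G x - F y * G y) with ((F x - F y) * G x + F y * (G x - G y)) by ring.
  eapply Rle_trans; [apply Rabs_triang|]. rewrite !Rabs_mult.
  pose proof (hol_nonneg c F Hc x y Hx Hy). pose proof (hol_nonneg d G Hd x y Hx Hy).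
  pose proof (HMG x Hx). pose proof (HMF y Hy).
  set (r := rpow (Rabs (x - y)) be) in *.
  assert (Rabs (F x - F y) * Rabs (G x) <= (Rabs c * r) * MG)
    by (apply Rmult_le_compat; auto using Rabs_pos).
  assert (Rabs (F y) * Rabs (G x - G y) <= MF * (Rabs d * r))
    by (apply Rmult_le_compat; auto using Rabs_pos).
  nra.
Qed.

Lemma hol_inv F m : 0 < m -> (forall x, A <= x <= B -> m <= F x) ->
  Hol A B be F -> Hol A B be (fun x => / F x).
Proof.
  intros Hm HFm [c Hc]. exists (Rabs c / (m * m)). intros x y Hx Hy.
  pose proof (HFm x Hx). pose proof (HFm y Hy).
  replace (/ F x - / F y) with ((F y - F x) * / (F x * F y)) by (field; lra).
  rewrite Rabs_mult. rewrite (Rabs_right (/ _)) by (left; apply Rinv_0_lt_compat; nra).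
  rewrite <- Rabs_Ropp. replace (- (F y - F x)) with (F x - F y) by ring.
  pose proof (hol_nonneg c F Hc x y Hx Hy).
  assert (/ (F x * F y) <= / (m * m)) by (apply Rinv_le_contravar; nra).
  unfold Rdiv.
  replace (Rabs c * / (m * m) * rpow (Rabs (x - y)) be) with
    ((Rabs c * rpow (Rabs (x - y)) be) * / (m * m)) by ring.
  apply Rmult_le_compat; auto using Rabs_pos. left; apply Rinv_0_lt_compat; nra.
Qed.

Lemma MVT' F F' x y :
  (forall z, Rmin x y <= z <= Rmax x y -> is_derive F z (F' z)) ->
  exists z, Rmin x y <= z <= Rmax x y /\ F x - F y = F' z * (x - y).
Proof.
  intros H. destruct (Rtotal_order x y) as [Hl|[He|Hg]].
  - destruct (MVT_cor2 F F' x y Hl) as [z [Ez Hz]].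
    { intros c Hc. apply is_derive_Reals. apply H.
      rewrite Rmin_left, Rmax_right by lra. auto. }
    exists z. rewrite Rmin_left, Rmax_right by lra. split; [lra|]. nra.
  - subst. exists y. rewrite Rmin_left, Rmax_left by lra. split; [lra|]. ring.
  - destruct (MVT_cor2 F F' y x Hg) as [z [Ez Hz]].
    { intros c Hc. apply is_derive_Reals. apply H.
      rewrite Rmin_right, Rmax_left by lra. auto. }
    exists z. rewrite Rmin_right, Rmax_left by lra. split; [lra|]. nra.
Qed.

Lemma hol_deriv F F' : (forall z, A <= z <= B -> is_derive F z (F' z)) ->
  Bnd A B F' -> Hol A B be F.
Proof.
  intros HD HB. destruct (bnd_nonneg F' HB) as [M [M0 HM]].
  exists (M * Rpower (B - A + 1) (1 - be)). intros x y Hx Hy.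
  destruct (MVT' F F' x y) as [z [Hz E]].
  { intros z Hz. apply HD. split.
    - eapply Rle_trans; [|apply Hz]. apply Rmin_glb; lra.
    - eapply Rle_trans; [apply Hz|]. apply Rmax_lub; lra. }
  assert (Hz' : A <= z <= B).
  { split. - eapply Rle_trans; [|apply Hz]. apply Rmin_glb; lra.
    - eapply Rle_trans; [apply Hz|]. apply Rmax_lub; lra. }
  rewrite E, Rabs_mult.
  assert (Rabs (x - y) <= Rpower (B - A + 1) (1 - be) * rpow (Rabs (x - y)) be).
  { apply rpow_lin; auto; [|lra]. split; [apply Rabs_pos|]. apply Rabs_le; lra. }
  pose proof (HM z Hz').
  rewrite Rmult_assoc. apply Rmult_le_compat; auto using Rabs_pos.
Qed.

End S.

Lemma delta_bounds th x1 x2 x3 :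
  let mn := Rmin (Rmin x1 x2) (Rmin x3 th) in
  let mx := Rmax (Rmax x1 x2) (Rmax x3 th) in
  (mn <= th <= mx) /\ (mn <= x1 <= mx) /\ (mn <= x2 <= mx) /\ (mn <= x3 <= mx).
Proof.
  intros mn mx. unfold mn, mx.
  pose proof (Rmin_l x1 x2). pose proof (Rmin_r x1 x2).
  pose proof (Rmin_l x3 th). pose proof (Rmin_r x3 th).
  pose proof (Rmin_l (Rmin x1 x2) (Rmin x3 th)). pose proof (Rmin_r (Rmin x1 x2) (Rmin x3 th)).
  pose proof (Rmax_l x1 x2). pose proof (Rmax_r x1 x2).
  pose proof (Rmax_l x3 th). pose proof (Rmax_r x3 th).
  pose proof (Rmax_l (Rmax x1 x2) (Rmax x3 th)). pose proof (Rmax_r (Rmax x1 x2) (Rmax x3 th)).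
  lra.
Qed.

Lemma prod_le a b p q : Rabs a <= p -> Rabs b <= q -> Rabs (a * b) <= p * q.
Proof. intros. rewrite Rabs_mult. apply Rmult_le_compat; auto using Rabs_pos. Qed.

Theorem lemma1 (beta A B : R) (f : R -> R) :
  0 <= beta <= 1 ->
  C3beta f A B beta ->
  (forall x, A <= x <= B -> 0 < Derive_n f 1 x) ->
  exists C : R, forall th x1 x2 x3 : R,
    A <= th <= B -> A <= x1 <= B -> A <= x2 <= B -> A <= x3 <= B ->
    Rabs ( Derive_n f 2 th / (2 * Derive_n f 1 th)
         + Derive_n f 3 th / (6 * Derive_n f 1 th) * (x1 + x2 + x3 - 3 * th)
         - (Derive_n f 2 th / (2 * Derive_n f 1 th)) ^ 2 * (x2 + x3 - 2 * th)
         - Derive_n f 2 x1 / (2 * Derive_n f 1 x1)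
         - 1 / 6 * Schwarzian f x1 * (x2 + x3 - 2 * x1) )
    <= C * rpow (Delta4 th x1 x2 x3) (1 + beta).
Proof.
  intros Hbe [Hder [K HK]] Hpos.
  destruct (Rle_dec A B) as [HAB|HAB]; [|exists 0; intros; lra].
  assert (dD1 : forall z, A <= z <= B -> is_derive (Derive_n f 1) z (Derive_n f 2 z)).
  { intros z Hz. exact (Derive_correct _ _ (proj1 (proj2 (Hder z Hz)))). }
  assert (dD2 : forall z, A <= z <= B -> is_derive (Derive_n f 2) z (Derive_n f 3 z)).
  { intros z Hz. exact (Derive_correct _ _ (proj2 (proj2 (Hder z Hz)))). }
  assert (HolD3 : Hol A B beta (Derive_n f 3)) by (exists K; exact HK).
  assert (HolD2 : Hol A B beta (Derive_n f 2))
    by (apply (hol_deriv A B beta Hbe HAB _ (Derive_n f 3)); auto; apply (hol_bnd A B beta Hbe HAB); auto).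
  assert (HolD1 : Hol A B beta (Derive_n f 1))
    by (apply (hol_deriv A B beta Hbe HAB _ (Derive_n f 2)); auto; apply (hol_bnd A B beta Hbe HAB); auto).
  destruct (continuity_ab_min (Derive_n f 1) A B HAB) as [mx [Hmx Hmxin]].
  { intros c Hc. apply continuity_pt_filterlim. apply (@ex_derive_continuous R_AbsRing R_NormedModule).
    exact (proj1 (proj2 (Hder c Hc))). }
  set (m := Derive_n f 1 mx).
  assert (Hm : 0 < m) by (apply Hpos; auto).
  set (h := fun x => Derive_n f 3 x * / (2 * Derive_n f 1 x)
                     - Derive_n f 2 x * Derive_n f 2 x * / (2 * (Derive_n f 1 x * Derive_n f 1 x))).
  set (g := fun x => Derive_n f 2 x / (2 * Derive_n f 1 x)).
  assert (Hh : Hol A B beta h).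
  { unfold h. apply hol_minus; auto; apply (hol_mult A B beta Hbe HAB); auto.
    - apply (hol_inv A B beta Hbe _ (2 * m)); [lra| |].
      + intros x Hx. specialize (Hmx x Hx). fold m in Hmx. lra.
      + apply (hol_mult A B beta Hbe HAB); auto. apply hol_const.
    - apply (hol_mult A B beta Hbe HAB); auto.
    - apply (hol_inv A B beta Hbe _ (2 * (m * m))); [nra| |].
      + intros x Hx. specialize (Hmx x Hx). fold m in Hmx. nra.
      + apply (hol_mult A B beta Hbe HAB); auto. apply hol_const. apply (hol_mult A B beta Hbe HAB); auto. }
  assert (Hg : Hol A B beta g).
  { unfold g, Rdiv. apply (hol_mult A B beta Hbe HAB); auto.
    apply (hol_inv A B beta Hbe _ (2 * m)); [lra| |].
    + intros x Hx. specialize (Hmx x Hx). fold m in Hmx. lra.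
    + apply (hol_mult A B beta Hbe HAB); auto. apply hol_const. }
  assert (dg : forall z, A <= z <= B -> is_derive g z (h z)).
  { intros z Hz. pose proof (Hpos z Hz).
    pose proof (is_derive_div (Derive_n f 2) (fun t => 2 * Derive_n f 1 t) z _ _
      (dD2 z Hz) (is_derive_scal _ _ 2 _ (dD1 z Hz))) as HD.
    replace (h z) with ((Derive_n f 3 z * (2 * Derive_n f 1 z) -
         Derive_n f 2 z * (2 * Derive_n f 2 z)) / (2 * Derive_n f 1 z) ^ 2).
    - apply HD. lra.
    - unfold h. field. lra. }
  destruct Hh as [ch Hch].
  destruct (bnd_nonneg A B g (hol_bnd A B beta Hbe HAB g Hg)) as [Mg [Mg0 HMg]].
  destruct (bnd_nonneg A B h (hol_bnd A B beta Hbe HAB h (ex_intro _ ch Hch))) as [Mh [Mh0 HMh]].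
  set (c0 := Rpower (B - A + 1) (1 - beta)).
  exists (7/3 * Rabs ch + 8/3 * Mh * Mg * c0).
  intros th x1 x2 x3 Hth H1 H2 H3.
  pose proof (delta_bounds th x1 x2 x3) as Hdb. cbv zeta in Hdb.
  unfold Delta4.
  set (mn := Rmin (Rmin x1 x2) (Rmin x3 th)) in *.
  set (mX := Rmax (Rmax x1 x2) (Rmax x3 th)) in *.
  set (Dl := mX - mn).
  assert (Hmn : A <= mn) by (unfold mn; repeat apply Rmin_glb; lra).
  assert (HmX : mX <= B) by (unfold mX; repeat apply Rmax_lub; lra).
  destruct (MVT' g h x1 th) as [xi [Hxi Exi]].
  { intros z Hz. apply dg. split.
    - eapply Rle_trans; [|apply Hz]. apply Rmin_glb; lra.
    - eapply Rle_trans; [apply Hz|]. apply Rmax_lub; lra. }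
  assert (Hxi' : mn <= xi <= mX).
  { split. - eapply Rle_trans; [|apply Hxi]. apply Rmin_glb; lra.
    - eapply Rle_trans; [apply Hxi|]. apply Rmax_lub; lra. }
  pose proof (Hpos th Hth). pose proof (Hpos x1 H1).
  assert (E : Derive_n f 2 th / (2 * Derive_n f 1 th)
         + Derive_n f 3 th / (6 * Derive_n f 1 th) * (x1 + x2 + x3 - 3 * th)
         - (Derive_n f 2 th / (2 * Derive_n f 1 th)) ^ 2 * (x2 + x3 - 2 * th)
         - Derive_n f 2 x1 / (2 * Derive_n f 1 x1)
         - 1 / 6 * Schwarzian f x1 * (x2 + x3 - 2 * x1)
       = (g th - g x1 + h th * (x1 - th))
         + 1/3 * ((h th - h x1) * (x2 + x3 - 2 * x1))
         + 1/3 * ((g x1 - g th) * (g x1 + g th) * (x2 + x3 - 2 * x1))).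
  { unfold g, h, Schwarzian. field. lra. }
  rewrite E. clear E.
  replace (g th - g x1 + h th * (x1 - th)) with ((h th - h xi) * (x1 - th)) by lra.
  set (Rr := rpow Dl beta).
  assert (HR0 : 0 <= Rr) by apply rpow_ge0.
  assert (HDl : 0 <= Dl <= B - A) by (unfold Dl; lra).
  assert (Hlin : Dl <= c0 * Rr) by (apply rpow_lin; lra).
  assert (a1 : Rabs (h th - h xi) <= Rabs ch * Rr).
  { eapply Rle_trans. apply (hol_nonneg A B beta _ h Hch); lra.
    apply Rmult_le_compat_l; [apply Rabs_pos|]. apply rpow_mono; [lra|].
    split; [apply Rabs_pos|]. apply Rabs_le; unfold Dl; lra. }
  assert (a2 : Rabs (h th - h x1) <= Rabs ch * Rr).
  { eapply Rle_trans. apply (hol_nonneg A B beta _ h Hch); lra.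
    apply Rmult_le_compat_l; [apply Rabs_pos|]. apply rpow_mono; [lra|].
    split; [apply Rabs_pos|]. apply Rabs_le; unfold Dl; lra. }
  assert (b1 : Rabs (x1 - th) <= Dl) by (apply Rabs_le; unfold Dl; lra).
  assert (b2 : Rabs (x2 + x3 - 2 * x1) <= 4 * Dl) by (apply Rabs_le; unfold Dl; lra).
  assert (a3 : Rabs (g x1 - g th) <= Mh * Dl).
  { rewrite Exi. apply prod_le; auto. apply HMh. lra. }
  assert (a4 : Rabs (g x1 + g th) <= 2 * Mg).
  { eapply Rle_trans; [apply Rabs_triang|]. pose proof (HMg x1 H1). pose proof (HMg th Hth). lra. }
  pose proof (prod_le _ _ _ _ a1 b1) as t1.
  pose proof (prod_le _ _ _ _ a2 b2) as t2.
  pose proof (prod_le _ _ _ _ (prod_le _ _ _ _ a3 a4) b2) as t3.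
  rewrite <- rpow_mul by lra. fold Rr.
  eapply Rle_trans; [apply Rabs_triang|].
  eapply Rle_trans; [apply Rplus_le_compat_r; apply Rabs_triang|].
  rewrite !(Rabs_mult (1/3)). rewrite (Rabs_right (1/3)) by lra.
  assert (Mh * Dl * (2 * Mg) * (4 * Dl) <= Mh * Mg * 8 * Dl * (c0 * Rr)).
  { replace (Mh * Dl * (2 * Mg) * (4 * Dl)) with (Mh * Mg * 8 * Dl * Dl) by ring.
    apply Rmult_le_compat_l; auto. assert (0 <= Mh * Mg) by nra. nra. }
  pose proof (Rabs_pos ch).
  nra.
Qed.
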